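(* Let $p$ be a prime, $\mathbb F=\mathbb F_{p^2}$, $\beta\in\mathbb F$ with $\beta^p-\beta=1$, and in the rational function field $\mathbb F(y)$ put $x=y^p-y$ and $$\delta(y)=\prod_{a=1}^{p-1}\Big(\frac{\beta-(y+a)}{y+a}\Big)^{a}.$$ Then (i) in $\Omega^1_{\mathbb F(y)/\mathbb F}$, $$y^p\frac{dx}{x}-(\beta-y)^p\frac{dx}{1-x}=\frac{d\delta(y)}{\delta(y)};$$ (ii) $\dfrac{\delta(y+1)}{\delta(y)}\equiv\dfrac{x}{1-x}\mod \mathbb F(y)^{\times p}$. *)

(* Defs.v *)
From HB Require Import structures.
From mathcomp Require Import all_boot all_order all_algebra.
From mathcomp Require Import fraction generic_quotient.
Set Implicit Arguments. Unset Strict Implicit. Unset Printing Implicit Defensive.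
Import Order.TTheory GRing.Theory Num.Theory.
Local Open Scope ring_scope.
Notation tofracp F := (@FracField.tofrac {poly F}).

Definition ratfun (F : fieldType) := {fraction {poly F}}.

Definition ry (F : fieldType) : ratfun F := tofracp F 'X.
Definition rc (F : fieldType) (c : F) : ratfun F := tofracp F c%:P.

(* Universal derivation d : F(y) -> Omega^1_{F(y)/F}.
   Omega^1_{F(y)/F} is the free F(y)-module of rank one on dy; we represent a
   differential  g dy  by its coefficient g : F(y).  Then  d f = (df/dy) dy,
   where df/dy is the formal derivative of the rational function f computed
   from any representative n/d by the quotient rule. *)
Definition dfrac (F : fieldType) (f : ratfun F) : ratfun F :=
  let r := repr f in
  let n := \n_r in let d := \d_r in
  tofracp F (n^`() * d - n * d^`()) / tofracp F (d ^+ 2).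

Definition delta (F : fieldType) (p : nat) (beta : F) (t : ratfun F) : ratfun F :=
  \prod_(1 <= a < p) ((rc beta - (t + a%:R)) / (t + a%:R)) ^+ a.

(* Main.v *)
Require Import Defs.
From HB Require Import structures.
From mathcomp Require Import all_boot all_order all_algebra.
From mathcomp Require Import fraction generic_quotient.
From mathcomp Require Import all_field.
From mathcomp Require Import ring.
Import Order.TTheory GRing.Theory Num.Theory.
Local Open Scope ring_scope.
Local Open Scope quotient_scope.
Local Notation "x %:F" := (@FracField.tofrac _ x).

Lemma frac_reprM (R : idomainType) (f : {fraction R}) :
  f * (\d_(repr f))%:F = (\n_(repr f))%:F.
Proof.
set r := repr f.
have -> : f = \pi r by rewrite /r reprK.
unlock FracField.tofrac.
rewrite !piE /FracField.mulf /=.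
apply/eqmodP => /=. rewrite FracField.equivfE /=.
rewrite !numden_Ratio ?mulf_neq0 ?oner_neq0 ?denom_ratioP //.
by rewrite !mulr1 mulrC.
Qed.

Lemma frac_repr (R : idomainType) (f : {fraction R}) :
  exists n d, d != 0 /\ f = n%:F / d%:F.
Proof.
exists (\n_(repr f)), (\d_(repr f)); split; first exact: denom_ratioP.
by rewrite -frac_reprM mulfK // tofrac_eq0 denom_ratioP.
Qed.

Lemma polyid (R: comRingType) (n d n0 d0 n' d' n0' d0' : R): (n0' * d0 - n0 * d0') * d^+2 = (n' * d - n * d') * d0^+2 - (d*d0)*(n'*d0 + n*d0' - (n0'*d + n0*d')) + (d0'*d + d'*d0)*(n*d0 - n0*d).
Proof. ring. Qed.

Lemma DM_alg (K : fieldType) (a b c d a' b' c' d' : K) : c != 0 -> d != 0 ->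
  ((a' * b + a * b') * (c * d) - a * b * (c' * d + c * d')) / (c * d * (c * d)) =
  (a' * c - a * c') / (c * c) * (b / d) + a / c * ((b' * d - b * d') / (d * d)).
Proof. by move=> c0 d0; field; rewrite c0 d0. Qed.

Lemma DV_alg (K : fieldType) (a b a' b' : K) : a != 0 -> b != 0 ->
  (b' * a - b * a') / (a * a) = - ((a' * b - a * b') / (b * b)) / (a / b) ^+ 2.
Proof. by move=> a0 b0; field; rewrite a0 b0. Qed.

Lemma LM_alg (K : fieldType) (f g a b : K) : f != 0 -> g != 0 ->
  (a * g + f * b) / (f * g) = a / f + b / g.
Proof. by move=> a0 b0; field; rewrite a0 b0. Qed.

Lemma LV_alg (K : fieldType) (f a : K) : f != 0 ->
  (- a / f ^+ 2) / f^-1 = - (a / f).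
Proof. by move=> a0; field; rewrite a0 oner_neq0. Qed.

Arguments frac_repr {R}.
Section D.
Variable F : fieldType.
Local Notation K := (ratfun F).
Local Notation D := (@dfrac F).

Lemma dfracE (n d : {poly F}) : d != 0 ->
  D (n%:F / d%:F) = (n^`() * d - n * d^`())%:F / (d ^+ 2)%:F.
Proof.
move=> dn0; rewrite /dfrac.
set f := n%:F / d%:F.
have := @frac_reprM _ f; have := denom_ratioP (repr f).
set n0 := \n_(repr f); set d0 := \d_(repr f) => d00 H.
have E : n * d0 = n0 * d.
  apply/eqP; rewrite -tofrac_eq !rmorphM /= -H /f mulrAC divfK //.
  by rewrite tofrac_eq0.
have E' : n^`() * d0 + n * d0^`() = n0^`() * d + n0 * d^`().
  by rewrite -!derivM E.
apply/eqP; rewrite eqr_div ?tofrac_eq0 ?expf_neq0 // -!rmorphM tofrac_eq.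
by rewrite (@polyid _ n _ _ _ n^`() d^`()) E E' !subrr !mulr0 subr0 addr0.
Qed.
Lemma D_poly (q : {poly F}) : D q%:F = (q^`())%:F.
Proof.
rewrite -[q%:F]divr1 -(rmorph1 (@FracField.tofrac {poly F})) dfracE ?oner_neq0 //.
by rewrite -polyC1 derivC mulr0 subr0 polyC1 expr1n !rmorph1 !divr1 mulr1.
Qed.

Lemma D0 : D 0 = 0.
Proof. by rewrite -(rmorph0 (@FracField.tofrac {poly F})) D_poly deriv0 rmorph0. Qed.

Lemma D_M (f g : K) : D (f * g) = D f * g + f * D g.
Proof.
case: (frac_repr f) => n1 [d1 [d10 ->]]; case: (frac_repr g) => n2 [d2 [d20 ->]].
have t1 : d1%:F != 0 :> K by rewrite tofrac_eq0.
have t2 : d2%:F != 0 :> K by rewrite tofrac_eq0.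
have -> : n1%:F / d1%:F * (n2%:F / d2%:F) = (n1*n2)%:F / (d1*d2)%:F :> K.
  by rewrite mulf_div !rmorphM.
rewrite !dfracE ?mulf_neq0 // !derivM !(rmorphB, rmorphM, rmorphD, rmorphXn) /=.
move: t1 t2; move: (n1%:F) (n2%:F) (d1%:F) (d2%:F) (n1^`()%:F) (n2^`()%:F) (d1^`()%:F) (d2^`()%:F).
move=> a b c d a' b' c' d' c0 d0.
move: (@DM_alg _ a b c d a' b' c' d' c0 d0) => ->; reflexivity.
Qed.

Lemma D_V (f : K) : D (f^-1) = - D f / f ^+ 2.
Proof.
have [->|f0] := eqVneq f 0; first by rewrite invr0 D0 oppr0 mul0r.
case: (frac_repr f) f0 => n [d [d0 ->]] f0.
have n0 : n != 0 by apply: contraNneq f0 => ->; rewrite rmorph0 mul0r.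
have t1 : d%:F != 0 :> K by rewrite tofrac_eq0.
have t2 : n%:F != 0 :> K by rewrite tofrac_eq0.
rewrite invf_div !dfracE // !(rmorphB, rmorphM, rmorphD, rmorphXn) /=.
move: t1 t2; move: (n%:F) (d%:F) (n^`()%:F) (d^`()%:F).
move=> a b a' b' b0 a0.
move: (@DV_alg _ a b a' b' a0 b0) => ->; reflexivity.
Qed.

Definition L (f : K) := D f / f.

Lemma L_M (f g : K) : f != 0 -> g != 0 -> L (f * g) = L f + L g.
Proof. move=> f0 g0; rewrite /L D_M. move: (D f) (D g) => a b. move: (@LM_alg _ f g a b f0 g0) => ->; reflexivity. Qed.

Lemma L_V (f : K) : f != 0 -> L (f^-1) = - L f.
Proof. move=> f0; rewrite /L D_V. move: (D f) => a. move: (@LV_alg _ f a f0) => ->; reflexivity. Qed.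

Lemma L1 : L 1 = 0.
Proof.
by rewrite /L -(rmorph1 (@FracField.tofrac {poly F})) D_poly -polyC1 derivC rmorph0 mul0r.
Qed.

Lemma L_X (f : K) n : f != 0 -> L (f ^+ n) = n%:R * L f.
Proof.
move=> f0; elim: n => [|n IH]; first by rewrite expr0 L1 mul0r.
by rewrite exprS L_M ?expf_neq0 // IH mulrS mulrDl mul1r.
Qed.

Lemma L_prod (I : Type) (r : seq I) (G : I -> K) :
  (forall i, G i != 0) -> L (\prod_(i <- r) G i) = \sum_(i <- r) L (G i).
Proof.
move=> G0; elim: r => [|i r IH]; first by rewrite !big_nil L1.
have P0 : \prod_(j <- r) G j != 0.
  apply: (big_ind (fun u : K => u != 0)); first exact: oner_neq0.
    by move=> u v; apply: mulf_neq0.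
  by move=> j _; exact: G0.
rewrite big_cons.
rewrite (@L_M _ _ (G0 i) P0).
rewrite IH.
rewrite big_cons.
reflexivity.
Qed.

Lemma L_poly (q : {poly F}) : L q%:F = (q^`())%:F / q%:F.
Proof. by rewrite /L D_poly. Qed.

End D.

Section Poly.
Variables (K : fieldType) (p : nat).
Hypothesis pK : p \in [pchar K].

Lemma natr_inj_lt (i j : nat) : (i < p)%N -> (j < p)%N -> (i%:R : K) = j%:R -> i = j.
Proof.
have pp : prime p := pcharf_prime pK.
wlog ij : i j / (i <= j)%N.
  move=> W ip jp E; case: (leqP i j) => h; first exact: W.
  by symmetry; apply: W => //; exact: ltnW.
move=> ip jp E.
have : (p %| (j - i))%N.
  by rewrite (dvdn_pcharf pK) (natrB K ij) E subrr.
move=> /dvdn_leq H; case: (posnP (j - i)%N) => h.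
  by apply/eqP; rewrite eqn_leq ij /= -subn_eq0 h.
have le := H h.
have : (j - i < p)%N by apply: (leq_ltn_trans (leq_subr i j)).
by rewrite ltnNge le.
Qed.

Lemma prod_sub_nat (t : K) : \prod_(0 <= i < p) (t - i%:R) = t ^+ p - t.
Proof.
have pp : prime p := pcharf_prime pK.
set rs := [seq (i%:R : K) | i <- iota 0 p].
set P : {poly K} := 'X^p - 'X.
have Hroot : all (root P) rs.
  apply/allP => z /mapP [i _ ->]; rewrite /root /P !hornerE.
  by rewrite -(pFrobenius_autE pK) pFrobenius_aut_nat subrr.
have Huniq : uniq rs.
  rewrite map_inj_in_uniq ?iota_uniq // => i j; rewrite !mem_iota !add0n.
  by move=> /andP [_ ip] /andP [_ jp]; apply: natr_inj_lt.
have Hu : uniq_roots rs by rewrite uniq_rootsE.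
have [q Pq] := uniq_roots_prod_XsubC Hroot Hu.
set Q := \prod_(z <- rs) ('X - z%:P) in Pq.
have p1 : (1 < p)%N := prime_gt1 pp.
have sX : (size (- 'X : {poly K}) < size ('X^p : {poly K}))%N.
  by rewrite size_polyN size_polyX size_polyXn ltnS.
have sP : size P = p.+1 by rewrite /P size_addl // size_polyXn.
have lP : lead_coef P = 1 by rewrite /P lead_coefDl // lead_coefXn.
have mQ : Q \is monic by apply: monic_prod_XsubC.
have sQ : size Q = p.+1 by rewrite size_prod_XsubC size_map size_iota.
have q0 : q != 0 by apply: contra_eqN Pq => /eqP ->; rewrite mul0r -size_poly_eq0 sP.
have sq : size q = 1%N.
  move: sP; rewrite Pq size_Mmonic // sQ addnS /= => E.
  by apply/eqP; rewrite -(eqn_add2r p) E add1n.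
have q1 : q = 1.
  have lq : lead_coef q = 1 by move: lP; rewrite Pq lead_coefM (monicP mQ) mulr1.
  rewrite [q]size1_polyC ?sq // -[q`_0]/(q`_(1.-1)) -sq.
  by rewrite -/(lead_coef q) lq.
have PQ : P = Q by rewrite Pq q1 mul1r.
have := congr1 (fun r => r.[t]) PQ.
rewrite /P /Q !hornerE horner_prod big_map => ->.
rewrite /index_iota subn0; apply: eq_bigr => i _; by rewrite hornerXsubC.
Qed.
End Poly.
Arguments prod_sub_nat {K p}.

Lemma tele (K : comRingType) (h : nat -> K) n :
  \prod_(1 <= a < n.+1) h a.+1 ^+ a * \prod_(0 <= a < n.+1) h a =
  h 0%N * \prod_(1 <= a < n.+1) h a ^+ a * h n.+1 ^+ n.
Proof.
elim: n => [|n IH].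
  by rewrite big_nat1 !big_geq // !mul1r mulr1 expr0 mulr1.
rewrite big_nat_recr //= [X in _ * X]big_nat_recr //= [in RHS]big_nat_recr //=.
have -> : \prod_(1 <= i < n.+1) h i.+1 ^+ i * h n.+2 ^+ n.+1 *
   (\prod_(0 <= i < n.+1) h i * h n.+1) =
   (\prod_(1 <= a < n.+1) h a.+1 ^+ a * \prod_(0 <= a < n.+1) h a) * (h n.+2 ^+ n.+1 * h n.+1).
  by rewrite mulrACA.
rewrite IH [h n.+1 ^+ n.+1]exprS.
move: (\prod_(1 <= i < n.+1) h i ^+ i) (h n.+1 ^+ n) (h n.+2 ^+ n.+1) => P Q S.
ring.
Qed.

Lemma prod_nz (K : idomainType) (I : Type) (r : seq I) (G : I -> K) :
  (forall i, G i != 0) -> \prod_(i <- r) G i != 0.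
Proof.
move=> G0; apply: (big_ind (fun u : K => u != 0)); first exact: oner_neq0.
  by move=> u v; apply: mulf_neq0.
by move=> j _; exact: G0.
Qed.

Lemma term_alg (K : fieldType) (a y b : K) : y + a != 0 -> b - (y + a) != 0 ->
  a * (- (b - (y + a))^-1 - (y + a)^-1) = y * (y + a)^-1 - (b - y) * (b - (y + a))^-1.
Proof. by move=> h1 h2; field; rewrite h1 h2. Qed.

Section Abs.
Variables (K : fieldType) (p : nat) (Dd : K -> K) (y b : K).
Hypothesis pK : p \in [pchar K].
Hypothesis hM : forall f g, Dd (f * g) = Dd f * g + f * Dd g.
Hypothesis hV : forall f, Dd f^-1 = - Dd f / f ^+ 2.
Hypothesis h1 : Dd 1 = 0.
Hypothesis H1 : forall a : nat, Dd (y + a%:R) = 1.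
Hypothesis H2 : forall a : nat, Dd (b - (y + a%:R)) = -1.
Hypothesis H3 : Dd (y ^+ p - y) = -1.
Hypothesis H4 : Dd (1 - (y ^+ p - y)) = 1.
Hypothesis nzu : forall a : nat, y + a%:R != 0.
Hypothesis nzv : forall a : nat, b - (y + a%:R) != 0.
Hypothesis hb : b ^+ p - b = 1.

Local Definition LL (f : K) := Dd f / f.

Lemma LL_M (f g : K) : f != 0 -> g != 0 -> LL (f * g) = LL f + LL g.
Proof. by move=> f0 g0; rewrite /LL hM; field; rewrite f0 g0. Qed.

Lemma LL_V (f : K) : f != 0 -> LL (f^-1) = - LL f.
Proof. by move=> f0; rewrite /LL hV; field; rewrite f0 oner_neq0. Qed.

Lemma LL1 : LL 1 = 0.
Proof. by rewrite /LL h1 mul0r. Qed.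

Lemma LL_X (f : K) n : f != 0 -> LL (f ^+ n) = n%:R * LL f.
Proof.
move=> f0; elim: n => [|n IH]; first by rewrite expr0 LL1 mul0r.
by rewrite exprS LL_M ?expf_neq0 // IH mulrS mulrDl mul1r.
Qed.

Lemma LL_prod (I : Type) (r : seq I) (G : I -> K) :
  (forall i, G i != 0) -> LL (\prod_(i <- r) G i) = \sum_(i <- r) LL (G i).
Proof.
move=> G0; elim: r => [|i r IH]; first by rewrite !big_nil LL1.
by rewrite !big_cons LL_M ?IH ?prod_nz.
Qed.

Lemma abs_main : let x := y ^+ p - y in
  (y ^+ p * (Dd x / x) - (b - y) ^+ p * (Dd x / (1 - x)) =
     Dd (\prod_(1 <= a < p) ((b - (y + a%:R)) / (y + a%:R)) ^+ a) /
        \prod_(1 <= a < p) ((b - (y + a%:R)) / (y + a%:R)) ^+ a)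
  /\ (exists g : K, g != 0 /\
     \prod_(1 <= a < p) ((b - (y + 1 + a%:R)) / (y + 1 + a%:R)) ^+ a /
     \prod_(1 <= a < p) ((b - (y + a%:R)) / (y + a%:R)) ^+ a
     = x / (1 - x) * g ^+ p).
Proof.
move=> x.
have pp : prime p := pcharf_prime pK.
have pn : [pchar K].-nat p by rewrite (eq_pnat _ (pcharf_eq pK)) pnat_id.
have p0 : (p%:R : K) = 0 := pcharf0 pK.
have Au : \prod_(0 <= a < p) (y + a%:R) = x.
  have := prod_sub_nat pK (-y).
  rewrite exprNn_pchar // opprK.
  have E : forall a : nat, -y - a%:R = -1 * (y + a%:R).
    by move=> a; rewrite mulN1r opprD.
  rewrite (eq_bigr _ (fun a _ => E a)) big_split /= prodr_const_nat subn0.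
  rewrite exprNn_pchar // expr1n mulN1r => E2.
  by apply: oppr_inj; rewrite E2 /x opprB addrC.
have bp : b ^+ p = 1 + b by rewrite -hb subrK.
have byp : (b - y) ^+ p = 1 + b - y ^+ p.
  by rewrite exprDn_pchar // exprNn_pchar // bp.
have Av : \prod_(0 <= a < p) (b - (y + a%:R)) = 1 - x.
  have := prod_sub_nat pK (b - y).
  have E : forall a : nat, b - y - a%:R = b - (y + a%:R).
    by move=> a; rewrite opprD addrA.
  rewrite (eq_bigr _ (fun a _ => E a)) byp => ->.
  by rewrite /x; ring.
have x0 : x != 0 by rewrite -Au prod_nz.
have x1 : 1 - x != 0 by rewrite -Av prod_nz.
have hx : y ^+ p = x + y by rewrite /x subrK.
have H3' : Dd x = -1 by exact: H3.
have H4' : Dd (1 - x) = 1 by exact: H4.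
have Lu a : LL (y + a%:R) = (y + a%:R)^-1 by rewrite /LL H1 div1r.
have Lv a : LL (b - (y + a%:R)) = - (b - (y + a%:R))^-1 by rewrite /LL H2 mulN1r.
have Su : \sum_(0 <= a < p) (y + a%:R)^-1 = -1 / x.
  by rewrite -(eq_bigr _ (fun a _ => Lu a)) -LL_prod // Au /LL H3'.
have Sv : \sum_(0 <= a < p) (b - (y + a%:R))^-1 = - (1 / (1 - x)).
  have E a : (b - (y + a%:R))^-1 = - LL (b - (y + a%:R)).
    by rewrite Lv opprK.
  by rewrite (eq_bigr _ (fun a _ => E a)) sumrN -LL_prod // Av /LL H4'.
split.
  transitivity (LL (\prod_(1 <= a < p) ((b - (y + a%:R)) / (y + a%:R)) ^+ a)); last by [].
  rewrite LL_prod; last by move=> a; rewrite expf_neq0 // mulf_neq0 ?invr_eq0.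
  have E a : LL (((b - (y + a%:R)) / (y + a%:R)) ^+ a) =
      a%:R * (- (b - (y + a%:R))^-1 - (y + a%:R)^-1).
    rewrite LL_X ?mulf_neq0 ?invr_eq0 // LL_M ?invr_eq0 // LL_V // Lu Lv.
    by [].
  rewrite (eq_bigr _ (fun a _ => E a)).
  have S0 : forall G : nat -> K, G 0%N = 0 ->
      \sum_(1 <= a < p) G a = \sum_(0 <= a < p) G a.
    by move=> G G0; rewrite (big_ltn (prime_gt0 pp)) G0 add0r.
  rewrite S0; last by rewrite mul0r.
  rewrite (eq_bigr _ (fun a _ => @term_alg _ _ _ _ (nzu a) (nzv a))).
  rewrite sumrB -!mulr_sumr Su Sv H3' byp hx.
  by field; rewrite x0 x1.
pose h := fun a : nat => (b - (y + a%:R)) / (y + a%:R).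
have hz a : h a != 0 by rewrite /h mulf_neq0 ?invr_eq0.
exists (h 0%N); split; first exact: hz 0%N.
have E1 : \prod_(1 <= a < p) ((b - (y + 1 + a%:R)) / (y + 1 + a%:R)) ^+ a =
    \prod_(1 <= a < p) h a.+1 ^+ a.
  by apply: eq_bigr => a _; rewrite /h -addrA nat1r.
have E0 : \prod_(1 <= a < p) ((b - (y + a%:R)) / (y + a%:R)) ^+ a =
    \prod_(1 <= a < p) h a ^+ a by [].
rewrite E1 E0.
have T := @tele _ h (p.-1).
rewrite prednK ?prime_gt0 // in T.
have hp : h p = h 0%N by rewrite /h p0.
have H : \prod_(0 <= a < p) h a = (1 - x) / x by rewrite /h prodf_div Av Au.
rewrite hp H in T.
have P0 : \prod_(1 <= a < p) h a ^+ a != 0 by apply: prod_nz => a; rewrite expf_neq0.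
have gp : h 0%N ^+ p = h 0%N * h 0%N ^+ p.-1 by rewrite -exprS prednK // prime_gt0.
rewrite gp.
move: T.
move: (\prod_(1 <= a < p) h a.+1 ^+ a) (\prod_(1 <= a < p) h a ^+ a) P0 (h 0%N) (h 0%N ^+ p.-1).
move=> P1 Q Q0 g G T.
have -> : P1 = g * Q * G * (x / (1 - x)).
  by rewrite -T -mulrA mulf_div [(1 - x) * x]mulrC divff ?mulr1 // mulf_neq0.
by field; rewrite x1 Q0.
Qed.
End Abs.

Theorem mainTheorem12 (p : nat) (F : finFieldType) (beta : F) :
  prime p -> #|F| = (p ^ 2)%N -> beta ^+ p - beta = 1 ->
  let y := ry F in
  let x := y ^+ p - y in
  (* (i) identity of differentials in Omega^1_{F(y)/F} (coefficients of dy) *)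
  (y ^+ p * (dfrac x / x) - (rc beta - y) ^+ p * (dfrac x / (1 - x))
     = dfrac (delta p beta y) / delta p beta y)
  /\
  (* (ii) delta(y+1)/delta(y) = x/(1-x) modulo F(y)^{x p} *)
  (exists g : ratfun F, g != 0 /\
     delta p beta (y + 1) / delta p beta y = x / (1 - x) * g ^+ p).
Proof.
move=> pp cardF hb y x.
have pF : p \in [pchar F] := card_finPcharP cardF pp.
have pP : p \in [pchar {poly F}] := rmorph_pchar (@polyC F) pF.
have pK : p \in [pchar (ratfun F)] := rmorph_pchar (@FracField.tofrac _) pP.
have tn : forall a : nat, ((a%:R : F)%:P)%:F = a%:R :> ratfun F.
  by move=> a; rewrite (rmorph_nat (@polyC F)) (rmorph_nat (@FracField.tofrac _)).
have ya : forall a : nat, y + a%:R = ('X - (- (a%:R : F))%:P)%:F.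
  by move=> a; rewrite polyCN opprK rmorphD /= tn.
have va : forall a : nat, rc beta - (y + a%:R) = - ('X - (beta - a%:R)%:P)%:F.
  by move=> a; rewrite /rc /y /ry polyCB !rmorphB /= tn opprB opprD addrA [in LHS]addrAC.
have h1 : dfrac (1 : ratfun F) = 0.
  by rewrite -(rmorph1 (@FracField.tofrac {poly F})) D_poly -polyC1 derivC rmorph0.
have H1 : forall a : nat, dfrac (y + a%:R) = 1.
  by move=> a; rewrite ya D_poly derivXsubC rmorph1.
have H2 : forall a : nat, dfrac (rc beta - (y + a%:R)) = -1.
  by move=> a; rewrite va -rmorphN D_poly derivN derivXsubC rmorphN rmorph1.
have xp : y ^+ p - y = ('X^p - 'X)%:F by rewrite rmorphB rmorphXn.
have dxp : ('X^p - 'X : {poly F})^`() = -1.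
  by rewrite derivB derivXn derivX -mulr_natr (pcharf0 pP) mulr0 sub0r.
have H3 : dfrac (y ^+ p - y) = -1 by rewrite xp D_poly dxp rmorphN rmorph1.
have H4 : dfrac (1 - (y ^+ p - y)) = 1.
  rewrite xp -(rmorph1 (@FracField.tofrac {poly F})) -rmorphB D_poly derivB dxp.
  by rewrite -polyC1 derivC sub0r opprK rmorph1.
have nzu : forall a : nat, y + a%:R != 0.
  by move=> a; rewrite ya tofrac_eq0 monic_neq0 // monicXsubC.
have nzv : forall a : nat, rc beta - (y + a%:R) != 0.
  by move=> a; rewrite va oppr_eq0 tofrac_eq0 monic_neq0 // monicXsubC.
have hb' : rc beta ^+ p - rc beta = 1.
  by rewrite /rc -!rmorphXn -!rmorphB hb !rmorph1.
have := @abs_main _ _ _ _ _ pK (@D_M F) (@D_V F) h1 H1 H2 H3 H4 nzu nzv hb'.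
rewrite /delta /x.
move=> /= [A B]; split; [exact: A | exact: B].
Qed.
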